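(* Every Lindelöf Hausdorff topological group $G$ which is a $P$-space and satisfies $\psi(G)\leq\mathfrak c$ has $w(G)\leq\mathfrak c$.
   Context: A space is a $P$-space if every $G_\delta$-subset is open. $\psi$ pseudocharacter, $w$ weight, $\mathfrak c=2^\omega$. *)

(* Defs.v *)
From Stdlib Require Import Classical.

Definition set (T : Type) := T -> Prop.

Definition is_topology {T : Type} (op : set T -> Prop) : Prop :=
  op (fun _ => True) /\
  (forall U V, op U -> op V -> op (fun x => U x /\ V x)) /\
  (forall (I : Type) (F : I -> set T), (forall i, op (F i)) ->
     op (fun x => exists i, F i x)).

Definition prod_open {T : Type} (op : set T -> Prop) (W : set (T * T)) : Prop :=
  forall p, W p -> exists U V, op U /\ op V /\ U (fst p) /\ V (snd p) /\
    (forall a b, U a -> V b -> W (a, b)).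

Definition is_group {T : Type} (mul : T -> T -> T) (inv : T -> T) (e : T) : Prop :=
  (forall x y z, mul x (mul y z) = mul (mul x y) z) /\
  (forall x, mul e x = x) /\ (forall x, mul x e = x) /\
  (forall x, mul (inv x) x = e) /\ (forall x, mul x (inv x) = e).

Definition is_topological_group {T : Type} (op : set T -> Prop)
    (mul : T -> T -> T) (inv : T -> T) (e : T) : Prop :=
  is_topology op /\ is_group mul inv e /\
  (forall W, op W -> prod_open op (fun p => W (mul (fst p) (snd p)))) /\
  (forall W, op W -> op (fun x => W (inv x))).

Definition countable_pred {I : Type} (A : I -> Prop) : Prop :=
  exists f : {i : I | A i} -> nat, forall a b, f a = f b -> a = b.

Definition lindelof {T : Type} (op : set T -> Prop) : Prop :=
  forall (I : Type) (U : I -> set T), (forall i, op (U i)) ->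
    (forall x, exists i, U i x) ->
    exists J : I -> Prop, countable_pred J /\ (forall x, exists i, J i /\ U i x).

Definition hausdorff {T : Type} (op : set T -> Prop) : Prop :=
  forall x y : T, x <> y -> exists U V, op U /\ op V /\ U x /\ V y /\
    (forall z, U z -> V z -> False).

Definition P_space {T : Type} (op : set T -> Prop) : Prop :=
  forall U : nat -> set T, (forall n, op (U n)) -> op (fun x => forall n, U n x).

Definition card_le_c (I : Type) : Prop :=
  exists f : I -> (nat -> bool), forall a b, f a = f b -> a = b.

Definition pseudochar_le_c {T : Type} (op : set T -> Prop) : Prop :=
  forall x : T, exists (I : Type) (U : I -> set T), card_le_c I /\
    (forall i, op (U i) /\ U i x) /\ (forall y, (forall i, U i y) -> y = x).

Definition weight_le_c {T : Type} (op : set T -> Prop) : Prop :=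
  exists (I : Type) (B : I -> set T), card_le_c I /\ (forall i, op (B i)) /\
    (forall W x, op W -> W x -> exists i, B i x /\ (forall y, B i y -> W y)).

(* Main.v *)
Require Import Defs.
From Stdlib Require Import Classical ClassicalEpsilon FunctionalExtensionality PropExtensionality Arith Cantor.

Section S.
Variables (G : Type) (op : set G -> Prop) (mul : G -> G -> G) (inv : G -> G) (e : G).
Hypothesis TG : is_topological_group op mul inv e.

Lemma assoc x y z : mul x (mul y z) = mul (mul x y) z.
Proof. destruct TG as [_ [[h _] _]]; apply h. Qed.
Lemma mul_e_l x : mul e x = x.
Proof. destruct TG as [_ [[_ [h _]] _]]; apply h. Qed.
Lemma mul_e_r x : mul x e = x.
Proof. destruct TG as [_ [[_ [_ [h _]]] _]]; apply h. Qed.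
Lemma inv_l x : mul (inv x) x = e.
Proof. destruct TG as [_ [[_ [_ [_ [h _]]]] _]]; apply h. Qed.
Lemma inv_r x : mul x (inv x) = e.
Proof. destruct TG as [_ [[_ [_ [_ [_ h]]]] _]]; apply h. Qed.

Lemma inv_e : inv e = e.
Proof. rewrite <- (mul_e_r (inv e)). apply inv_l. Qed.

Lemma inv_inv a : inv (inv a) = a.
Proof.
  rewrite <- (mul_e_r (inv (inv a))), <- (inv_l a), assoc, inv_l, mul_e_l. reflexivity.
Qed.

Lemma inv_mul a b : inv (mul a b) = mul (inv b) (inv a).
Proof.
  assert (E : mul (mul a b) (mul (inv b) (inv a)) = e).
  { rewrite <- assoc, (assoc b), inv_r, mul_e_l, inv_r. reflexivity. }
  rewrite <- (mul_e_r (inv (mul a b))), <- E, assoc, inv_l, mul_e_l. reflexivity.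
Qed.

Lemma op_top : op (fun _ => True).
Proof. destruct TG as [[h _] _]; exact h. Qed.
Lemma op_inter U V : op U -> op V -> op (fun x => U x /\ V x).
Proof. destruct TG as [[_ [h _]] _]; apply h. Qed.
Lemma op_union (I : Type) (F : I -> set G) : (forall i, op (F i)) -> op (fun x => exists i, F i x).
Proof. destruct TG as [[_ [_ h]] _]; apply h. Qed.
Lemma op_inv W : op W -> op (fun x => W (inv x)).
Proof. destruct TG as [_ [_ [_ h]]]; apply h. Qed.
Lemma op_mul W : op W -> prod_open op (fun p => W (mul (fst p) (snd p))).
Proof. destruct TG as [_ [_ [h _]]]; apply h. Qed.

Lemma open_of_local (P : set G) :
  (forall x, P x -> exists V, op V /\ V x /\ forall z, V z -> P z) -> op P.
Proof.
  intro H.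
  assert (E : (fun x => exists i : {V : set G | op V /\ forall z, V z -> P z}, proj1_sig i x) = P).
  { apply functional_extensionality; intro x; apply propositional_extensionality; split.
    - intros [i hx]; destruct i as [V [oV hV]]; simpl in hx; auto.
    - intro hx; destruct (H x hx) as [V [oV [Vx hV]]].
      exists (exist _ V (conj oV hV)); exact Vx. }
  rewrite <- E; apply op_union; intro i; exact (proj1 (proj2_sig i)).
Qed.

Lemma op_transl a W : op W -> op (fun y => W (mul a y)).
Proof.
  intro oW; apply open_of_local; intros y Wy.
  destruct (op_mul W oW (a, y) Wy) as [A [B [oA [oB [Aa [By h]]]]]].
  exists B; repeat split; auto. intros z Bz; exact (h a z Aa Bz).
Qed.

Lemma step (V : set G) : op V -> V e -> exists V', op V' /\ V' e /\
   (forall x, V' x -> V' (inv x)) /\ (forall x y, V' x -> V' y -> V (mul x y)) /\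
   (forall x, V' x -> V x).
Proof.
  intros oV Ve.
  assert (Ve' : V (mul (fst (e,e)) (snd (e,e)))) by (simpl; rewrite mul_e_l; exact Ve).
  destruct (op_mul V oV (e, e) Ve') as [A [B [oA [oB [Ae [Be h]]]]]]; simpl in *.
  exists (fun x => (A x /\ B x) /\ (A (inv x) /\ B (inv x))).
  split; [|split; [|split; [|split]]].
  - apply op_inter. apply op_inter; auto. apply (op_inv (fun x => A x /\ B x)), op_inter; auto.
  - rewrite inv_e; auto.
  - intros x [[? ?] [? ?]]; rewrite inv_inv; auto.
  - intros x y [[? ?] _] [[? ?] _]; auto.
  - intros x [[Ax _] _]. rewrite <- (mul_e_r x). auto.
Qed.

Hypothesis PS : P_space op.

Definition goodset := {V : set G | op V /\ V e}.

Lemma step' (V : goodset) : {V' : goodset | (forall x, proj1_sig V' x -> proj1_sig V' (inv x)) /\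
   (forall x y, proj1_sig V' x -> proj1_sig V' y -> proj1_sig V (mul x y)) /\
   (forall x, proj1_sig V' x -> proj1_sig V x)}.
Proof.
  destruct V as [V [oV Ve]].
  destruct (constructive_indefinite_description _ (step V oV Ve)) as [V' [o [h1 h2]]].
  exists (exist _ V' (conj o h1)); simpl; exact h2.
Defined.

Lemma subgroup_in (U : set G) : op U -> U e -> exists H, op H /\ H e /\ (forall x, H x -> U x) /\
  (forall x y, H x -> H y -> H (mul x y)) /\ (forall x, H x -> H (inv x)).
Proof.
  intros oU Ue.
  set (sq := fix sq (n : nat) : goodset := match n with
        | 0 => exist _ U (conj oU Ue) | S n => proj1_sig (step' (sq n)) end).
  exists (fun x => forall n, proj1_sig (sq (S n)) x).
  repeat split.
  - apply (PS (fun n => proj1_sig (sq (S n)))). intro n; exact (proj1 (proj2_sig (sq (S n)))).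
  - intro n; exact (proj2 (proj2_sig (sq (S n)))).
  - intros x h. apply (proj2 (proj2 (proj2_sig (step' (sq 0))))). apply (h 0).
  - intros x y hx hy n. apply (proj1 (proj2 (proj2_sig (step' (sq (S n)))))); [apply (hx (S n)) | apply (hy (S n))].
  - intros x hx n. apply (proj1 (proj2_sig (step' (sq n)))). apply hx.
Qed.

Lemma subgroup_compl_open (H : set G) : op H -> H e ->
  (forall x y, H x -> H y -> H (mul x y)) -> (forall x, H x -> H (inv x)) ->
  op (fun y => ~ H y).
Proof.
  intros oH He hm hi. apply open_of_local. intros y ny.
  exists (fun z => H (mul (inv y) z)). repeat split.
  - apply op_transl; auto.
  - rewrite inv_l; exact He.
  - intros z h1 h2. apply ny.
    assert (h3 := hi _ h1). rewrite inv_mul, inv_inv in h3.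
    assert (h4 := hm _ _ h2 h3).
    rewrite assoc, inv_r, mul_e_l in h4. exact h4.
Qed.

Section WithH.
Variables (I : Type) (H : I -> set G).
Hypotheses (Hop : forall i, op (H i)) (He : forall i, H i e)
  (Hm : forall i x y, H i x -> H i y -> H i (mul x y)) (Hi : forall i x, H i x -> H i (inv x))
  (Hsep : forall y, y <> e -> exists i, ~ H i y).
Hypothesis LL : lindelof op.

Definition Hs (s : nat -> option I) : set G :=
  fun x => forall n, match s n with Some i => H i x | None => True end.

Lemma Hs_op s : op (Hs s).
Proof.
  assert (E : Hs s = fun x => forall n, (match s n with Some i => H i | None => fun _ => True end) x).
  { apply functional_extensionality; intro x; unfold Hs; apply propositional_extensionality;
    split; intros h n; specialize (h n); destruct (s n); auto. }
  rewrite E; apply PS. intro n; destruct (s n); [apply Hop | apply op_top].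
Qed.
Lemma Hs_e s : Hs s e.
Proof. intro n; destruct (s n); auto. Qed.
Lemma Hs_m s x y : Hs s x -> Hs s y -> Hs s (mul x y).
Proof. intros a b n; specialize (a n); specialize (b n); destruct (s n); auto. Qed.
Lemma Hs_i s x : Hs s x -> Hs s (inv x).
Proof. intros a n; specialize (a n); destruct (s n); auto. Qed.

Lemma coset_cover s : exists J : G -> Prop, exists f : {x | J x} -> nat,
  (forall a b, f a = f b -> a = b) /\ forall y, exists x, J x /\ Hs s (mul (inv x) y).
Proof.
  destruct (LL G (fun x y => Hs s (mul (inv x) y))) as [J [[f finj] hJ]].
  - intro x; apply op_transl, Hs_op.
  - intro y; exists y; rewrite inv_l; apply Hs_e.
  - exists J, f; split; auto.
Qed.

Definition CJ s := proj1_sig (constructive_indefinite_description _ (coset_cover s)).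
Definition Cf s := proj1_sig (constructive_indefinite_description _
   (proj2_sig (constructive_indefinite_description _ (coset_cover s)))).
Lemma Cf_spec s : (forall a b, Cf s a = Cf s b -> a = b) /\
   forall y, exists x, CJ s x /\ Hs s (mul (inv x) y).
Proof. unfold Cf, CJ. destruct (constructive_indefinite_description _ (coset_cover s)) as [J hJ]; simpl.
  destruct (constructive_indefinite_description _ hJ) as [f h]. exact h. Qed.

Definition B (p : (nat -> option I) * nat) : set G :=
  fun y => exists x : {x | CJ (fst p) x}, Cf (fst p) x = snd p /\
     Hs (fst p) (mul (inv (proj1_sig x)) y).

Lemma B_op p : op (B p).
Proof.
  apply open_of_local. intros y [x [hx hy]].
  exists (fun z => Hs (fst p) (mul (inv (proj1_sig x)) z)). repeat split; auto.
  - apply op_transl, Hs_op.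
  - intros z hz; exists x; auto.
Qed.

Lemma small_Hs (W : set G) : op W -> W e -> exists s, forall y, Hs s y -> W y.
Proof.
  intros oW We.
  destruct (LL (option I) (fun o => match o with None => W | Some i => fun y => ~ H i y end))
    as [J [[f finj] hJ]].
  - intros [i|]; [apply subgroup_compl_open; auto | exact oW].
  - intro y. destruct (classic (W y)) as [Wy|nWy]; [exists None; exact Wy|].
    assert (y <> e) by (intro; subst; auto).
    destruct (Hsep y H0) as [i hi]; exists (Some i); exact hi.
  - assert (Hn : forall n, exists o : option I, forall j : {j | J j}, f j = n -> o = proj1_sig j).
    { intro n. destruct (classic (exists j, f j = n)) as [[j hj]|hn].
      - exists (proj1_sig j); intros j' hj'. rewrite (finj j j'); congruence.
      - exists None; intros j hj; exfalso; eauto. }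
    exists (fun n => proj1_sig (constructive_indefinite_description _ (Hn n))).
    intros y hy. destruct (hJ y) as [o [Jo ho]].
    destruct o as [i|]; [|exact ho].
    exfalso; apply ho.
    specialize (hy (f (exist _ (Some i) Jo))).
    pose proof (proj2_sig (constructive_indefinite_description _ (Hn (f (exist _ (Some i) Jo))))
       (exist _ (Some i) Jo) eq_refl) as E. simpl in E.
    cbv beta in hy. rewrite E in hy. exact hy.
Qed.

Lemma base W x : op W -> W x -> exists p, B p x /\ forall y, B p y -> W y.
Proof.
  intros oW Wx.
  destruct (small_Hs (fun z => W (mul x z))) as [s hs].
  - apply op_transl; auto.
  - rewrite mul_e_r; auto.
  - destruct (Cf_spec s) as [finj hc].
    destruct (hc x) as [x' [Jx' hx']].
    exists (s, Cf s (exist _ x' Jx')). split.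
    + exists (exist _ x' Jx'); simpl; auto.
    + intros y [x'' [e1 hy]]; simpl in *.
      apply finj in e1; subst x''; simpl in hy.
      assert (h := Hs_m _ _ _ (Hs_i _ _ hx') hy).
      rewrite inv_mul, inv_inv, <- assoc, (assoc x'), inv_r, mul_e_l in h.
      specialize (hs _ h). rewrite assoc, inv_r, mul_e_l in hs. exact hs.
Qed.

Definition enc_opt (g : I -> nat -> bool) (o : option I) : nat -> bool :=
  match o with None => fun _ => false
  | Some i => fun b => match b with 0 => true | S b' => g i b' end end.

Lemma enc_opt_inj g : (forall a b, g a = g b -> a = b) ->
  forall a b, enc_opt g a = enc_opt g b -> a = b.
Proof.
  intros gi [a|] [b|] h; auto.
  - f_equal; apply gi; apply functional_extensionality; intro k.
    exact (f_equal (fun F => F (S k)) h).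
  - exfalso; pose proof (f_equal (fun F => F 0) h); discriminate.
  - exfalso; pose proof (f_equal (fun F => F 0) h); discriminate.
Qed.

Lemma weight_ok : card_le_c I -> weight_le_c op.
Proof.
  intros [g gi].
  exists ((nat -> option I) * nat)%type, B. repeat split.
  - exists (fun p k => let (a, b) := of_nat k in
       match a with 0 => Nat.eqb b (snd p) | S a' => enc_opt g (fst p a') b end).
    intros [s m] [s' m'] h; simpl in h.
    assert (hk : forall a b, (match a with 0 => Nat.eqb b m | S a' => enc_opt g (s a') b end)
                 = (match a with 0 => Nat.eqb b m' | S a' => enc_opt g (s' a') b end)).
    { intros a b. pose proof (f_equal (fun F => F (to_nat (a, b))) h) as h1; cbv beta in h1.
      rewrite cancel_of_to in h1. exact h1. }
    f_equal.
    + apply functional_extensionality; intro a. apply (enc_opt_inj g gi).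
      apply functional_extensionality; intro b. exact (hk (S a) b).
    + pose proof (hk 0 m) as h0. rewrite Nat.eqb_refl in h0. symmetry in h0.
      apply Nat.eqb_eq in h0; auto.
  - apply B_op.
  - intros W x oW Wx. exact (base W x oW Wx).
Qed.
End WithH.
End S.

Theorem mainTheorem12 (G : Type) (op : set G -> Prop)
  (mul : G -> G -> G) (inv : G -> G) (e : G) :
  is_topological_group op mul inv e ->
  lindelof op -> hausdorff op -> P_space op -> pseudochar_le_c op ->
  weight_le_c op.
Proof.
  intros TG LL _ PS PC.
  destruct (PC e) as [I [U [cI [hU hsep]]]].
  assert (Hex : forall i, exists H, op H /\ H e /\ (forall x, H x -> U i x) /\
    (forall x y, H x -> H y -> H (mul x y)) /\ (forall x, H x -> H (inv x))).
  { intro i; apply (subgroup_in G op mul inv e TG PS); apply hU. }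
  set (H := fun i => proj1_sig (constructive_indefinite_description _ (Hex i))).
  assert (HP : forall i, op (H i) /\ H i e /\ (forall x, H i x -> U i x) /\
    (forall x y, H i x -> H i y -> H i (mul x y)) /\ (forall x, H i x -> H i (inv x))).
  { intro i; unfold H; destruct (constructive_indefinite_description _ (Hex i)) as [h p]; exact p. }
  apply (weight_ok G op mul inv e TG PS I H).
  - intro i; apply HP.
  - intro i; apply HP.
  - intros i x y; apply HP.
  - intros i x; apply HP.
  - intros y ny. apply NNPP; intro hn. apply ny, hsep. intro i.
    apply NNPP; intro nu. apply hn; exists i; intro hy; apply nu, HP, hy.
  - exact LL.
  - exact cI.
Qed.
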